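(* Let $d\ge 1$, $\ell\in\{1,\dots,d\}$, and $\mu,\theta,\eta,k>0$. Consider a continuous-time Markov chain $(X(t),Z_1(t),Z_2(t))_{t\ge0}$ on $\mathbb{Z}_{\ge0}^d\times\mathbb{Z}_{\ge0}\times\mathbb{Z}_{\ge0}$, $X=(X_1,\dots,X_d)$, describing a stochastic reaction network on species $\mathbf{X}_1,\dots,\mathbf{X}_d$ (with arbitrary reactions whose stoichiometries involve only the species $\mathbf{X}_1,\dots,\mathbf{X}_d$ and whose propensities depend only on $X$) interconnected with the antithetic integral controller consisting of the reactions $$\emptyset\xrightarrow{\ \mu\ }\mathbf{Z}_1,\qquad \emptyset\xrightarrow{\ \theta X_\ell\ }\mathbf{Z}_2,\qquad \mathbf{Z}_1+\mathbf{Z}_2\xrightarrow{\ \eta Z_1Z_2\ }\emptyset,\qquad \emptyset\xrightarrow{\ kZ_1\ }\mathbf{X}_1,$$ and possibly additionally a feedback reaction $\emptyset\xrightarrow{F(X_\ell)}\mathbf{X}_1$ with a nonnegative propensity function $F$ (the labels over the arrows denote the propensities). Let $\mathcal{A}$ denote the generator of this chain and let $\pi$ be a stationary distribution of the chain such that all the expectations below are finite and $\mathbb{E}_\pi[\mathcal{A}f]=0$ for each of the functions $f\in\{z_1,\,z_2,\,z_1^2,\,z_2^2,\,(z_1-z_2)^2\}$. Then, regardless of the reactions and parameters of the controlled network, $$\mathrm{Cov}_\pi(X_\ell,Z_1-Z_2)=\frac{\mu}{\theta},\qquad \mathbb{E}_\pi[Z_1Z_2]=\frac{\mu}{\eta},$$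 $$\mathbb{E}_\pi[Z_1^2Z_2]=\frac{\mu}{\eta}\bigl(1+\mathbb{E}_\pi[Z_1]\bigr),\qquad \mathbb{E}_\pi[Z_1Z_2^2]=\frac{\mu+\theta\,\mathbb{E}_\pi[X_\ell Z_2]}{\eta}.$$
   Context: A reaction with propensity $\lambda(x,z)$ and stoichiometric (jump) vector $\zeta$ makes the Markov chain jump from state $(x,z)$ to $(x,z)+\zeta$ at rate $\lambda(x,z)$; the generator acts on functions $f$ by $(\mathcal{A}f)(x,z)=\sum_{\text{reactions}}\lambda(x,z)\bigl(f((x,z)+\zeta)-f(x,z)\bigr)$. $\mathbb{E}_\pi$ and $\mathrm{Cov}_\pi$ denote expectation and covariance under $\pi$. The paper states these identities ''under the assumption that these invariants exist, i.e. they are finite''; the finiteness/stationary moment equation assumption above formalizes this. *)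

(* Defs.v *)
From HB Require Import structures.
From mathcomp Require Import all_boot all_order all_algebra.
From mathcomp Require Import all_classical all_reals.
From mathcomp Require Import topology normedtype sequences esum.
Set Implicit Arguments. Unset Strict Implicit. Unset Printing Implicit Defensive.
Import Order.TTheory GRing.Theory Num.Theory.
Local Open Scope classical_set_scope.
Local Open Scope ring_scope.

Section CRN.
Variables (R : realType) (d : nat).

(* State (x, z1, z2) with x = (X_1, ..., X_d); integer coordinates so that
   jumps are additions; the chain lives on the nonnegative orthant. *)
Definition xstate := {ffun 'I_d -> int}.
Definition state := (xstate * int * int)%type.
Definition sx (s : state) : xstate := s.1.1.
Definition sz1 (s : state) : int := s.1.2.
Definition sz2 (s : state) : int := s.2.

Definition orthant : set state :=
  [set s | (forall i, (0 <= sx s i)%R) /\ (0 <= sz1 s)%R /\ (0 <= sz2 s)%R].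

(* a reaction: (propensity, stoichiometric jump vector) *)
Definition reaction := ((state -> R) * state)%type.

Definition generator (rs : seq reaction) (f : state -> R) (s : state) : R :=
  \sum_(r <- rs) r.1 s * (f (s + r.2) - f s).

(* stationary distribution of the chain with reactions rs on the orthant:
   probability on the orthant satisfying global balance pi Q = 0 *)
Definition stationary (rs : seq reaction) (pi : state -> R) : Prop :=
  [/\ (forall s, 0 <= pi s),
      (forall s, ~ orthant s -> pi s = 0),
      (\esum_(s in orthant) (pi s)%:E = 1)%E &
      forall s, orthant s ->
        (\esum_(s' in orthant)
            (pi s' * \sum_(r <- rs | (r.2 != 0) && (s' + r.2 == s)) r.1 s')%:E
         = (pi s * \sum_(r <- rs | r.2 != 0) r.1 s)%:E)%E].

Definition finite_exp (pi : state -> R) (g : state -> R) : Prop :=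
  summable orthant (fun s => (pi s * g s)%:E).

Definition Epi (pi : state -> R) (g : state -> R) : R :=
  fine (\esum_(s in orthant) (Num.max (pi s * g s) 0)%:E)
  - fine (\esum_(s in orthant) (Num.max (- (pi s * g s)) 0)%:E).

Definition Covpi (pi : state -> R) (f g : state -> R) : R :=
  Epi pi (fun s => f s * g s) - Epi pi f * Epi pi g.

Definition e1 (hd : (0 < d)%N) : xstate :=
  [ffun i => if i == Ordinal hd then 1 else 0].

Definition controlled_reactions (hd : (0 < d)%N) (l : 'I_d)
    (net : seq ((xstate -> R) * xstate)) (mu theta eta k : R) (F : int -> R)
    : seq reaction :=
  [seq ((fun s => r.1 (sx s)), (r.2, 0, 0)) | r <- net] ++
  [:: ((fun _ => mu), (0, 1, 0));
      ((fun s => theta * (sx s l)%:~R), (0, 0, 1));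
      ((fun s => eta * (sz1 s)%:~R * (sz2 s)%:~R), (0, -1, -1));
      ((fun s => k * (sz1 s)%:~R), (e1 hd, 0, 0));
      ((fun s => F (sx s l)), (e1 hd, 0, 0))].

End CRN.

(* Main.v *)
Require Import Defs.
From HB Require Import structures.
From mathcomp Require Import all_boot all_order all_algebra.
From mathcomp Require Import all_classical all_reals.
From mathcomp Require Import topology normedtype sequences esum.
From mathcomp Require Import ring lra.
Import Order.TTheory GRing.Theory Num.Theory.
Local Open Scope ring_scope.
From mathcomp Require Import ereal.
Section Gen.
Variables (R : realType) (T : choiceType) (D : set T).

Definition EE (u : T -> R) :=
  fine (\esum_(s in D) (Num.max (u s) 0)%:E) - fine (\esum_(s in D) (Num.max (- u s) 0)%:E).

Definition fe (a : T -> R) := (\esum_(s in D) (a s)%:E) \is a fin_num.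

Definition good (u : T -> R) := fe (fun s => Num.max (u s) 0) /\ fe (fun s => Num.max (- u s) 0).

Lemma esumZ (c : R) (a : T -> \bar R) : 0 <= c -> (forall s, (0 <= a s)%E) ->
  (\esum_(s in D) (c%:E * a s) = c%:E * \esum_(s in D) a s)%E.
Proof.
move=> c0 a0; rewrite /esum -ereal_supZl //; last first.
  by apply/set0P; exists 0%E; exists set0; [exact: fsets_set0|rewrite fsbig_set0].
congr ereal_sup; apply/seteqP; split => x /=.
  by case=> A HA <-; exists (\sum_(i \in A) a i)%E; [exists A|rewrite ge0_mule_fsumr].
by case=> y [A HA <-] <-; exists A => //; rewrite ge0_mule_fsumr.
Qed.

Lemma maxid (x : R) : Num.max x 0 - Num.max (- x) 0 = x.
Proof. case: (ger0P x) => h; case: (ger0P (-x)) => h'; lra. Qed.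

Lemma fe_le (a b : T -> R) : (forall s, 0 <= a s) -> (forall s, D s -> a s <= b s) -> fe b -> fe a.
Proof.
move=> a0 ab; rewrite /fe !fin_numElt => /andP[_ hb]; apply/andP; split.
  by apply: (lt_le_trans (ltNyr 0)); apply: esum_ge0 => s _; rewrite lee_fin.
by apply: le_lt_trans hb; apply: le_esum => s Ds; rewrite lee_fin ab.
Qed.

Lemma fe_ge0 (a : T -> R) : (forall s, 0 <= a s) -> (0 <= \esum_(s in D) (a s)%:E)%E.
Proof. by move=> a0; apply: esum_ge0 => s _; rewrite lee_fin. Qed.

Lemma decomp u a b : (forall s, 0 <= a s) -> (forall s, 0 <= b s) -> fe a -> fe b ->
  (forall s, D s -> u s = a s - b s) ->
  good u /\ EE u = fine (\esum_(s in D) (a s)%:E) - fine (\esum_(s in D) (b s)%:E).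
Proof.
move=> a0 b0 fa fb uab.
have gu : good u.
  split.
    apply: (fe_le _ _ _ _ fa) => [s|s Ds]; first by rewrite le_max lexx orbT.
    by rewrite uab // ge_max a0 andbT; have := b0 s; lra.
  apply: (fe_le _ _ _ _ fb) => [s|s Ds]; first by rewrite le_max lexx orbT.
  by rewrite uab // ge_max b0 andbT; have := a0 s; lra.
split => //; case: gu => gp gn.
have H : (\esum_(s in D) ((Num.max (u s) 0)%:E + (b s)%:E)
        = \esum_(s in D) ((Num.max (- u s) 0)%:E + (a s)%:E))%E.
  apply: eq_esum => s Ds; rewrite -!EFinD; congr EFin.
  have := maxid (u s); rewrite uab //; lra.
rewrite !esumD in H => //; try (by move=> s _; rewrite lee_fin ?le_max ?lexx ?orbT).
move: (congr1 fine H); rewrite !fineD //.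
rewrite /EE; lra.
Qed.

Lemma good_fe u : good u -> fe u = fe u. Proof. by []. Qed.

Lemma good_add u v : good u -> good v -> good (fun s => u s + v s) /\
  EE (fun s => u s + v s) = EE u + EE v.
Proof.
move=> [pu nu] [pv nv].
have := @decomp (fun s => u s + v s) (fun s => Num.max (u s) 0 + Num.max (v s) 0)
  (fun s => Num.max (- u s) 0 + Num.max (- v s) 0).
have Hp : forall x : R, 0 <= Num.max x 0 by move=> x; rewrite le_max lexx orbT.
have e1 : (\esum_(s in D) (Num.max (u s) 0 + Num.max (v s) 0)%:E =
   \esum_(s in D) (Num.max (u s) 0)%:E + \esum_(s in D) (Num.max (v s) 0)%:E)%E.
  rewrite -esumD; [by apply: eq_esum => s _; rewrite EFinD|by move=> s _; rewrite lee_fin|by move=> s _; rewrite lee_fin].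
have e2 : (\esum_(s in D) (Num.max (- u s) 0 + Num.max (- v s) 0)%:E =
   \esum_(s in D) (Num.max (- u s) 0)%:E + \esum_(s in D) (Num.max (- v s) 0)%:E)%E.
  rewrite -esumD; [by apply: eq_esum => s _; rewrite EFinD|by move=> s _; rewrite lee_fin|by move=> s _; rewrite lee_fin].
case.
- by move=> s; apply: addr_ge0.
- by move=> s; apply: addr_ge0.
- by rewrite /fe e1 fin_numD; exact/andP.
- by rewrite /fe e2 fin_numD; exact/andP.
- by move=> s _; have := maxid (u s); have := maxid (v s); lra.
move=> g ->; split => //; rewrite e1 e2 !fineD // /EE; lra.
Qed.

Lemma good_scale c u : good u -> good (fun s => c * u s) /\ EE (fun s => c * u s) = c * EE u.
Proof.
move=> [pu nu].
have Hp : forall x : R, 0 <= Num.max x 0 by move=> x; rewrite le_max lexx orbT.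
case: (lerP 0 c) => hc.
  have := @decomp (fun s => c * u s) (fun s => c * Num.max (u s) 0) (fun s => c * Num.max (- u s) 0).
  have e1 : forall w : T -> R, (\esum_(s in D) (c * Num.max (w s) 0)%:E = c%:E * \esum_(s in D) (Num.max (w s) 0)%:E)%E.
    move=> w; rewrite -esumZ //; try (by move=> s; rewrite lee_fin); by apply: eq_esum => s _; rewrite EFinM.
  case.
  - by move=> s; apply: mulr_ge0.
  - by move=> s; apply: mulr_ge0.
  - by rewrite /fe e1 fin_numM.
  - by rewrite /fe (e1 (fun s => - u s)) fin_numM.
  - by move=> s _; rewrite -mulrBr maxid.
  move=> g ->; split => //; rewrite !e1 !fineM // /EE /=; lra.
have := @decomp (fun s => c * u s) (fun s => - c * Num.max (- u s) 0) (fun s => - c * Num.max (u s) 0).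
have hc' : 0 <= - c by lra.
have e1 : forall w : T -> R, (\esum_(s in D) (- c * Num.max (w s) 0)%:E = (- c)%:E * \esum_(s in D) (Num.max (w s) 0)%:E)%E.
  move=> w; rewrite -esumZ //; try (by move=> s; rewrite lee_fin); by apply: eq_esum => s _; rewrite EFinM.
case.
- by move=> s; apply: mulr_ge0.
- by move=> s; apply: mulr_ge0.
- by rewrite /fe (e1 (fun s => - u s)) fin_numM.
- by rewrite /fe e1 fin_numM.
- by move=> s _; rewrite -{1}(maxid (u s)); ring.
move=> g ->; split => //; rewrite !e1 !fineM // /EE /=; lra.
Qed.

Lemma EE_lin (L : seq (R * (T -> R))) : (forall cu, cu \in L -> good cu.2) ->
  good (fun s => \sum_(cu <- L) cu.1 * cu.2 s) /\
  EE (fun s => \sum_(cu <- L) cu.1 * cu.2 s) = \sum_(cu <- L) cu.1 * EE cu.2.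
Proof.
elim: L => [|[c u] L IH] HL.
  have e : forall w : T -> R, (\esum_(s in D) (Num.max (w s) 0)%:E = 0)%E ->
      fe (fun s => Num.max (w s) 0) /\ fine (\esum_(s in D) (Num.max (w s) 0)%:E) = 0.
    by move=> w h; rewrite /fe h.
  have z : forall s : T, Num.max (\sum_(cu <- [::]) cu.1 * cu.2 s) 0 = 0 :> R.
    by move=> s; rewrite big_nil maxxx.
  have z' : forall s : T, Num.max (- \sum_(cu <- [::]) cu.1 * cu.2 s) 0 = 0 :> R.
    by move=> s; rewrite big_nil oppr0 maxxx.
  have [h1 h2] := e (fun s => \sum_(cu <- [::]) cu.1 * cu.2 s) (esum1 (fun s _ => congr1 EFin (z s))).
  have [h3 h4] := e (fun s => - \sum_(cu <- [::]) cu.1 * cu.2 s) (esum1 (fun s _ => congr1 EFin (z' s))).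
  by split; [split|rewrite big_nil /EE h2 h4 subrr].
have [g1 e1] := IH (fun cu h => HL cu ltac:(by rewrite in_cons h orbT)).
have [g2 e2] := good_scale c u (HL (c, u) (mem_head _ _)).
have [g3 e3] := good_add _ _ g2 g1.
have E : (fun s => \sum_(cu <- (c, u) :: L) cu.1 * cu.2 s) =
         (fun s => c * u s + \sum_(cu <- L) cu.1 * cu.2 s).
  by apply: funext => s; rewrite big_cons.
by rewrite E big_cons; split => //; rewrite e3 e2 e1.
Qed.

Lemma good_sm u : summable D (fun s => (u s)%:E) -> good u.
Proof.
rewrite summableE => h.
have Hp : forall x : R, 0 <= Num.max x 0 by move=> x; rewrite le_max lexx orbT.
have h' : fe (fun s => `|u s|) by rewrite /fe; under eq_esum do rewrite -abse_EFin.
split; apply: (fe_le _ _ _ _ h') => // s _; rewrite ge_max normr_ge0 andbT.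
  exact: ler_norm.
by rewrite -normrN; exact: ler_norm.
Qed.

End Gen.
Arguments EE {R T} D u.
Arguments fe {R T} D a.
Arguments good {R T} D u.
Arguments EE_lin {R T D} L _.
Arguments good_sm {R T D} u _.
Lemma genG (R : realType) d hd l net (mu theta eta k : R) F (G : R -> R -> R) (s : state d) :
  generator (controlled_reactions hd l net mu theta eta k F)
     (fun s => G (sz1 s)%:~R (sz2 s)%:~R) s =
  mu * (G ((sz1 s)%:~R + 1) (sz2 s)%:~R - G (sz1 s)%:~R (sz2 s)%:~R)
  + theta * (sx s l)%:~R * (G (sz1 s)%:~R ((sz2 s)%:~R + 1) - G (sz1 s)%:~R (sz2 s)%:~R)
  + eta * (sz1 s)%:~R * (sz2 s)%:~R * (G ((sz1 s)%:~R - 1) ((sz2 s)%:~R - 1) - G (sz1 s)%:~R (sz2 s)%:~R).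
Proof.
rewrite /generator /controlled_reactions big_cat big_map /= !big_cons big_nil /=.
rewrite big1 => [|r _]; last by rewrite /sz1 /sz2 /= !addr0 subrr mulr0.
rewrite /sz1 /sz2 /= !addr0 !subrr !mulr0 !addr0 !add0r.
rewrite !intrD. 
by rewrite ?rmorphN ?rmorph1 ?mulrN1z addrA.
Qed.

Lemma fold_good (R : realType) (T : choiceType) (D : set T) (L : seq (R * (T -> R))) :
  foldr (fun cu P => good D cu.2 /\ P) True L -> forall cu, cu \in L -> good D cu.2.
Proof.
elim: L => [//|cu L IH] /= [h1 h2] cu'; rewrite in_cons => /orP[/eqP->//|h].
exact: IH.
Qed.
Arguments fold_good {R T D L} _ _ _.

Ltac goods gpi gd := rewrite /=; repeat match goal with
  | |- _ /\ _ => split; [first [exact: gpi | apply: gd; rewrite !inE eqxx ?orbT] | ]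
  | |- True => exact I end.

Theorem mainTheorem1 (R : realType) (d : nat) (hd : (0 < d)%N) (l : 'I_d)
  (mu theta eta k : R) (net : seq ((xstate d -> R) * xstate d)) (F : int -> R)
  (pi : state d -> R) :
  0 < mu -> 0 < theta -> 0 < eta -> 0 < k ->
  (forall r, r \in net -> forall x : xstate d, (forall i, 0 <= x i) -> 0 <= r.1 x) ->
  (forall n : int, 0 <= n -> 0 <= F n) ->
  let rs := controlled_reactions hd l net mu theta eta k F in
  let X := fun s : state d => ((sx s l)%:~R : R) in
  let Z1 := fun s : state d => ((sz1 s)%:~R : R) in
  let Z2 := fun s : state d => ((sz2 s)%:~R : R) in
  let fs := [:: Z1; Z2; (fun s => Z1 s ^+ 2); (fun s => Z2 s ^+ 2);
                (fun s => (Z1 s - Z2 s) ^+ 2)] in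
  stationary rs pi ->
  (forall g, g \in [:: X; Z1; Z2; (fun s => X s * Z1 s); (fun s => X s * Z2 s);
                       (fun s => Z1 s * Z2 s); (fun s => Z1 s ^+ 2 * Z2 s);
                       (fun s => Z1 s * Z2 s ^+ 2)] -> finite_exp pi g) ->
  (forall f, f \in fs -> finite_exp pi (generator rs f)) ->
  (forall f, f \in fs -> Epi pi (generator rs f) = 0) ->
  [/\ Covpi pi X (fun s => Z1 s - Z2 s) = mu / theta,
      Epi pi (fun s => Z1 s * Z2 s) = mu / eta,
      Epi pi (fun s => Z1 s ^+ 2 * Z2 s) = mu / eta * (1 + Epi pi Z1) &
      Epi pi (fun s => Z1 s * Z2 s ^+ 2) = (mu + theta * Epi pi (fun s => X s * Z2 s)) / eta].
Proof.
move=> hmu hth het hk _ _ rs X Z1 Z2 fs [pi0 _ pi1 _] Hfin _ HA.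
set D := orthant (d := d).
have lin : forall (L : seq (R * (state d -> R))) (h : state d -> R),
    foldr (fun cu P => good D cu.2 /\ P) True L ->
    (forall s, pi s * h s = \sum_(cu <- L) cu.1 * cu.2 s) ->
    Epi pi h = \sum_(cu <- L) cu.1 * EE D cu.2.
  move=> L h HL Hh; change (EE D (fun s => pi s * h s) = \sum_(cu <- L) cu.1 * EE D cu.2).
  have -> : (fun s => pi s * h s) = (fun s => \sum_(cu <- L) cu.1 * cu.2 s).
    by apply: funext => s; exact: Hh.
  exact: (EE_lin L (fold_good HL)).2.
have gd : forall g, g \in [:: X; Z1; Z2; (fun s => X s * Z1 s); (fun s => X s * Z2 s);
                       (fun s => Z1 s * Z2 s); (fun s => Z1 s ^+ 2 * Z2 s);
                       (fun s => Z1 s * Z2 s ^+ 2)] -> good D (fun s => pi s * g s).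
  by move=> g hg; apply: good_sm; exact: Hfin.
have Ppos : forall s, Num.max (pi s) 0 = pi s by move=> s; case: (ger0P (pi s)) => h //; have := pi0 s; lra.
have Pneg : forall s, Num.max (- pi s) 0 = 0 by move=> s; case: (ger0P (- pi s)) => h //; have := pi0 s; lra.
have gpi : good D pi.
  split; rewrite /fe.
    by under eq_esum do rewrite Ppos; rewrite pi1.
  by under eq_esum do rewrite Pneg; rewrite esum1.
have Epi1 : EE D pi = 1.
  rewrite /EE; under eq_esum do rewrite Ppos; rewrite pi1.
  by under eq_esum do rewrite Pneg; rewrite esum1 // subr0.
have E1 := HA Z1 ltac:(by rewrite /fs !inE eqxx ?orbT).
rewrite (lin [:: (mu, pi); (- eta, fun s => pi s * (Z1 s * Z2 s))]) in E1; first last.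
  move=> s; rewrite !big_cons big_nil /rs /X /Z1 /Z2 (genG _ _ _ _ _ _ _ _ _ _ (fun a b => a)) /=; ring.
  by goods gpi gd.
have E2 := HA Z2 ltac:(by rewrite /fs !inE eqxx ?orbT).
rewrite (lin [:: (theta, fun s => pi s * X s); (- eta, fun s => pi s * (Z1 s * Z2 s))]) in E2; first last.
  move=> s; rewrite !big_cons big_nil /rs /X /Z1 /Z2 (genG _ _ _ _ _ _ _ _ _ _ (fun a b => b)) /=; ring.
  by goods gpi gd.
have E3 := HA (fun s => Z1 s ^+ 2) ltac:(by rewrite /fs !inE eqxx ?orbT).
rewrite (lin [:: (mu, pi); (2 * mu, fun s => pi s * Z1 s); (eta, fun s => pi s * (Z1 s * Z2 s));
   (- (2 * eta), fun s => pi s * (Z1 s ^+ 2 * Z2 s))]) in E3; first last.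
  move=> s; rewrite !big_cons big_nil /rs /X /Z1 /Z2 (genG _ _ _ _ _ _ _ _ _ _ (fun a b => a ^+ 2)) /=; ring.
  by goods gpi gd.
have E4 := HA (fun s => Z2 s ^+ 2) ltac:(by rewrite /fs !inE eqxx ?orbT).
rewrite (lin [:: (theta, fun s => pi s * X s); (2 * theta, fun s => pi s * (X s * Z2 s)); (eta, fun s => pi s * (Z1 s * Z2 s));
   (- (2 * eta), fun s => pi s * (Z1 s * Z2 s ^+ 2))]) in E4; first last.
  move=> s; rewrite !big_cons big_nil /rs /X /Z1 /Z2 (genG _ _ _ _ _ _ _ _ _ _ (fun a b => b ^+ 2)) /=; ring.
  by goods gpi gd.
have E5 := HA (fun s => (Z1 s - Z2 s) ^+ 2) ltac:(by rewrite /fs !inE eqxx ?orbT).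
rewrite (lin [:: (mu, pi); (2 * mu, fun s => pi s * Z1 s); (- (2 * mu), fun s => pi s * Z2 s);
   (theta, fun s => pi s * X s); (- (2 * theta), fun s => pi s * (X s * Z1 s));
   (2 * theta, fun s => pi s * (X s * Z2 s))]) in E5; first last.
  move=> s; rewrite !big_cons big_nil /rs /X /Z1 /Z2 (genG _ _ _ _ _ _ _ _ _ _ (fun a b => (a - b) ^+ 2)) /=; ring.
  by goods gpi gd.
rewrite /Covpi.
rewrite (lin [:: (1, fun s => pi s * (X s * Z1 s)); (-1, fun s => pi s * (X s * Z2 s))] (fun s => X s * (Z1 s - Z2 s))); first last.
  by move=> s; rewrite !big_cons big_nil /=; ring.
  by goods gpi gd.
rewrite (lin [:: (1, fun s => pi s * Z1 s); (-1, fun s => pi s * Z2 s)] (fun s => Z1 s - Z2 s)); first last.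
  by move=> s; rewrite !big_cons big_nil /=; ring.
  by goods gpi gd.
rewrite !big_cons !big_nil /= in E1 E2 E3 E4 E5 *.
rewrite Epi1 in E1 E3 E5.
rewrite (lin [:: (1, (fun s => pi s * X s))] X); first last.
  by move=> s; rewrite !big_cons big_nil /=; ring.
  by goods gpi gd.
rewrite (lin [:: (1, (fun s => pi s * Z1 s))] Z1); first last.
  by move=> s; rewrite !big_cons big_nil /=; ring.
  by goods gpi gd.
rewrite (lin [:: (1, (fun s => pi s * (Z1 s * Z2 s)))] (fun s => Z1 s * Z2 s)); first last.
  by move=> s; rewrite !big_cons big_nil /=; ring.
  by goods gpi gd.
rewrite (lin [:: (1, (fun s => pi s * (Z1 s ^+ 2 * Z2 s)))] (fun s => Z1 s ^+ 2 * Z2 s)); first last.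
  by move=> s; rewrite !big_cons big_nil /=; ring.
  by goods gpi gd.
rewrite (lin [:: (1, (fun s => pi s * (Z1 s * Z2 s ^+ 2)))] (fun s => Z1 s * Z2 s ^+ 2)); first last.
  by move=> s; rewrite !big_cons big_nil /=; ring.
  by goods gpi gd.
rewrite (lin [:: (1, (fun s => pi s * (X s * Z2 s)))] (fun s => X s * Z2 s)); first last.
  by move=> s; rewrite !big_cons big_nil /=; ring.
  by goods gpi gd.
rewrite !big_cons !big_nil /=.
set x := EE D (fun s => pi s * X s) in E1 E2 E3 E4 E5 *.
set z1 := EE D (fun s => pi s * Z1 s) in E1 E2 E3 E4 E5 *.
set z2 := EE D (fun s => pi s * Z2 s) in E1 E2 E3 E4 E5 *.
set xz1 := EE D (fun s => pi s * (X s * Z1 s)) in E1 E2 E3 E4 E5 *.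
set xz2 := EE D (fun s => pi s * (X s * Z2 s)) in E1 E2 E3 E4 E5 *.
set a := EE D (fun s => pi s * (Z1 s * Z2 s)) in E1 E2 E3 E4 E5 *.
set b := EE D (fun s => pi s * (Z1 s ^+ 2 * Z2 s)) in E1 E2 E3 E4 E5 *.
set c := EE D (fun s => pi s * (Z1 s * Z2 s ^+ 2)) in E1 E2 E3 E4 E5 *.
clearbody x z1 z2 xz1 xz2 a b c.
rewrite !mul1r !mulN1r !addr0 !mulr1 in E1 E2 E3 E4 E5 *.
have tn : theta != 0 by rewrite gt_eqF.
have en : eta != 0 by rewrite gt_eqF.
have hx : x = mu / theta by apply: (mulIf tn); rewrite divfK //; lra.
have hxz : xz1 - xz2 = mu * (1 + z1 - z2) / theta by apply: (mulIf tn); rewrite divfK //; lra.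
split.
- rewrite hxz hx; field; exact: tn.
- by apply: (mulIf en); rewrite divfK //; lra.
- by apply: (mulIf en); rewrite mulrAC divfK //; lra.
- by apply: (mulIf en); rewrite divfK //; lra.
Qed.
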